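(* If $0\to(M,\alpha_M)\to(K,\alpha_K)\xrightarrow{\pi}(L,\alpha_L)\to0$ is a universal $\alpha$-central extension of Hom-Leibniz $n$-algebras, then ${}_nHL_0^\alpha(K)={}_nHL_1^\alpha(K)=0$.
   Context: Fix a field $\mathbb K$ and $n\ge2$. A (multiplicative) Hom-Leibniz $n$-algebra is a $\mathbb K$-vector space $L$ with an $n$-linear bracket and a linear map $\alpha_L$ preserving the bracket, satisfying $[[x_1,\dots,x_n],\alpha_L(y_1),\dots,\alpha_L(y_{n-1})]=\sum_{i=1}^n[\alpha_L(x_1),\dots,[x_i,y_1,\dots,y_{n-1}],\dots,\alpha_L(x_n)]$. Homomorphisms preserve brackets and commute with twisting maps. Center $Z(K)$: elements $x$ with every bracket having $x$ in some position equal to $0$. An extension of $L$ is a surjective homomorphism $\pi:K\to L$ with kernel $M$; central if $M\subseteq Z(K)$; $\alpha$-central if every bracket with $n-1$ entries in $\alpha_K(M)$ and the remaining entry (any position) in $K$ vanishes. A central extension $\pi$ is universal $\alpha$-central if for every $\alpha$-central extension $\pi':K'\to L$ there is a unique homomorphism $h:K\to K'$ with $\pi'\circ h=\pi$. For a Hom-Leibniz $n$-algebra $(K,\alpha_K)$ define $\delta_1:K^{\otimes n}\to K$, $\delta_1(x_1\otimes\dots\otimes x_n)=[x_1,\dots,x_n]$, and $\delta_2:K^{\otimes(2n-1)}\to K^{\otimes n}$, $\delta_2(x_1\otimes\dots\otimes x_n\otimes y_1\otimes\dots\otimes y_{n-1})=[x_1,\dots,x_n]\otimes\alpha_K(y_1)\otimes\dots\otimes\alpha_K(y_{n-1})-\sum_{i=1}^n\alpha_K(x_1)\otimes\dots\otimes[x_i,y_1,\dots,y_{n-1}]\otimes\dots\otimes\alpha_K(x_n)$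 (in the $i$-th term all factors other than the $i$-th are $\alpha_K(x_j)$). Then ${}_nHL_0^\alpha(K)=K/[K,\dots,K]$ and ${}_nHL_1^\alpha(K)=\ker\delta_1/\operatorname{im}\delta_2$. *)

(* Defs.v *)
From HB Require Import structures.
From mathcomp Require Import all_boot all_order all_algebra.
Set Implicit Arguments. Unset Strict Implicit. Unset Printing Implicit Defensive.
Import GRing.Theory.
Local Open Scope ring_scope.

Section HomLeibniz.
Variables (F : fieldType) (n : nat).

Definition is_linear (V W : lmodType F) (f : V -> W) : Prop :=
  forall (a : F) (x y : V), f (a *: x + y) = a *: f x + f y.

Definition upd (V : Type) (u : {ffun 'I_n -> V}) (i : 'I_n) (x : V)
  : {ffun 'I_n -> V} := [ffun j => if j == i then x else u j].

Definition fmap (V W : Type) (f : V -> W) (u : {ffun 'I_n -> V})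
  : {ffun 'I_n -> W} := [ffun j => f (u j)].

(* the n-tuple (z, y_1, ..., y_{n-1}) *)
Definition hd_tup (V : Type) (z : V) (y : {ffun 'I_n.-1 -> V}) : {ffun 'I_n -> V} :=
  [ffun j : 'I_n => if nat_of_ord j is k.+1 then
       (if @insub _ (fun k => k < n.-1)%N 'I_n.-1 k is Some k' then y k' else z)
     else z].

Definition fmap' (V W : Type) (f : V -> W) (u : {ffun 'I_n.-1 -> V})
  : {ffun 'I_n.-1 -> W} := [ffun j => f (u j)].

Definition multilinear (V W : lmodType F) (f : {ffun 'I_n -> V} -> W) : Prop :=
  forall (i : 'I_n) (u : {ffun 'I_n -> V}) (a : F) (x y : V),
    f (upd u i (a *: x + y)) = a *: f (upd u i x) + f (upd u i y).

Record hleib := HLeib {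
  hl_sort :> lmodType F;
  hl_br : {ffun 'I_n -> hl_sort} -> hl_sort;
  hl_alpha : hl_sort -> hl_sort;
  hl_br_ml : multilinear hl_br;
  hl_alpha_lin : is_linear hl_alpha;
  hl_alpha_br : forall u, hl_alpha (hl_br u) = hl_br (fmap hl_alpha u);
  hl_leibniz : forall (x : {ffun 'I_n -> hl_sort}) (y : {ffun 'I_n.-1 -> hl_sort}),
    hl_br (hd_tup (hl_br x) (fmap' hl_alpha y))
    = \sum_(i < n) hl_br (upd (fmap hl_alpha x) i (hl_br (hd_tup (x i) y)))
}.

Definition is_hom (A B : hleib) (f : A -> B) : Prop :=
  [/\ is_linear f,
      forall u, f (hl_br u) = hl_br (fmap f u)
    & forall x, f (hl_alpha x) = hl_alpha (f x)].

Definition in_center (K : hleib) (x : K) : Prop :=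
  forall (i : 'I_n) (u : {ffun 'I_n -> K}), hl_br (upd u i x) = 0.

(* extension pi : K -> L (surjective homomorphism), kernel M = ker pi *)
Definition is_extension (K L : hleib) (pi : K -> L) : Prop :=
  is_hom pi /\ (forall l : L, exists k : K, pi k = l).

Definition in_ker (K L : hleib) (pi : K -> L) (x : K) : Prop := pi x = 0.

Definition central_ext (K L : hleib) (pi : K -> L) : Prop :=
  is_extension pi /\ forall x : K, in_ker pi x -> in_center x.

Definition alpha_central_ext (K L : hleib) (pi : K -> L) : Prop :=
  is_extension pi /\
  forall (i : 'I_n) (u : {ffun 'I_n -> K}),
    (forall j, j != i -> exists m : K, in_ker pi m /\ u j = hl_alpha m) ->
    hl_br u = 0.

Definition universal_alpha_central_ext (K L : hleib) (pi : K -> L) : Prop :=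
  central_ext pi /\
  forall (K' : hleib) (pi' : K' -> L), alpha_central_ext pi' ->
    exists h : K -> K', [/\ is_hom h, (forall x, pi' (h x) = pi x)
      & forall h' : K -> K', is_hom h' -> (forall x, pi' (h' x) = pi x) ->
          forall x, h' x = h x].

(* nHL_0(K) = K / [K,...,K] = 0 : K is spanned by brackets *)
Definition HL0_trivial (K : hleib) : Prop :=
  forall x : K, exists s : seq (F * {ffun 'I_n -> K}),
    x = \sum_(p <- s) p.1 *: hl_br p.2.

(* Elements of K^{(x)n} are represented by formal linear combinations of
   n-tuples (elements of the free vector space on K^n), modulo the
   subspace generated by the multilinearity relations. *)
Section Tensor.
Variable K : hleib.
Local Notation tup := {ffun 'I_n -> K}.
Local Notation comb := (seq (F * tup)).

Definition fcoef (t : comb) (u : tup) : F := \sum_(p <- t | p.2 == u) p.1.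

Definition cscale (c : F) (t : comb) : comb := [seq (c * p.1, p.2) | p <- t].

Definition ml_gen (i : 'I_n) (u : tup) (a : F) (x y : K) : comb :=
  [:: (1, upd u i (a *: x + y)); (- a, upd u i x); (-1, upd u i y)].

(* s and t represent the same element of K^{(x)n} *)
Definition tensor_eq (s t : comb) : Prop :=
  exists g : seq (F * ('I_n * tup * F * K * K)),
    forall u, fcoef s u - fcoef t u =
      fcoef (flatten [seq cscale q.1
                        (ml_gen q.2.1.1.1.1 q.2.1.1.1.2 q.2.1.1.2 q.2.1.2 q.2.2)
                     | q <- g]) u.

Definition delta1 (t : comb) : K := \sum_(p <- t) p.1 *: hl_br p.2.

Definition delta2 (x : tup) (y : {ffun 'I_n.-1 -> K}) : comb :=
  (1, hd_tup (hl_br x) (fmap' (@hl_alpha K) y))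
  :: [seq (-1, upd (fmap (@hl_alpha K) x) i (hl_br (hd_tup (x i) y))) | i <- enum 'I_n].

(* a general element of im delta_2: a linear combination of images of
   pure (2n-1)-tensors (which span K^{(x)(2n-1)}) *)
Definition delta2_comb (d : seq (F * (tup * {ffun 'I_n.-1 -> K}))) : comb :=
  flatten [seq cscale q.1 (delta2 q.2.1 q.2.2) | q <- d].

(* nHL_1(K) = ker delta_1 / im delta_2 = 0 *)
Definition HL1_trivial : Prop :=
  forall t : comb, delta1 t = 0 ->
    exists d, tensor_eq t (delta2_comb d).

End Tensor.

End HomLeibniz.

(* Main.v *)
From HB Require Import structures.
Require Import Defs.
From mathcomp Require Import all_boot all_order all_algebra.
From mathcomp Require Import ring.
From Stdlib Require Import ClassicalEpsilon FunctionalExtensionality PropExtensionality.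
Set Implicit Arguments. Unset Strict Implicit. Unset Printing Implicit Defensive.
Import GRing.Theory.
Local Open Scope ring_scope.


Section Comb.
Variables (F : fieldType) (X : choiceType).
Local Notation comb := (seq (F * X)).

Definition fc (t : comb) (u : X) : F := \sum_(p <- t | p.2 == u) p.1.
Definition csc (c : F) (t : comb) : comb := [seq (c * p.1, p.2) | p <- t].

Lemma fc_cat s t u : fc (s ++ t) u = fc s u + fc t u.
Proof. by rewrite /fc big_cat. Qed.
Lemma fc_csc c s u : fc (csc c s) u = c * fc s u.
Proof. by rewrite /fc big_map mulr_sumr. Qed.
Lemma fc_nil u : fc [::] u = 0.
Proof. by rewrite /fc big_nil. Qed.
Lemma fc_cons c x s u : fc ((c, x) :: s) u = (if x == u then c else 0) + fc s u.
Proof. by rewrite /fc big_cons /=; case: (x == u) => //; rewrite add0r. Qed.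

Definition vsum (M : lmodType F) (g : X -> M) (s : comb) : M :=
  \sum_(p <- s) p.1 *: g p.2.

Lemma vsum_l (M : lmodType F) (g : X -> M) (s : comb) (l : seq X) :
  uniq l -> {subset unzip2 s <= l} -> vsum g s = \sum_(u <- l) fc s u *: g u.
Proof.
move=> ul; elim: s => [|[c x] s IH] sub.
  by rewrite /vsum big_nil big1 // => u _; rewrite fc_nil scale0r.
rewrite /vsum big_cons /= -/(vsum g s) IH; last by move=> y ys; apply: sub; rewrite inE ys orbT.
under [RHS]eq_bigr => u _ do rewrite fc_cons scalerDl.
rewrite big_split /=; congr (_ + _).
have xl : x \in l by apply: sub; rewrite inE eqxx.
rewrite (bigD1_seq x) //= eqxx big1 ?addr0 // => u /negbTE; rewrite eq_sym => ->.
by rewrite scale0r.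
Qed.

Lemma vsum_fc (M : lmodType F) (g : X -> M) (s t : comb) :
  (forall u, fc s u = fc t u) -> vsum g s = vsum g t.
Proof.
move=> e; set l := undup (unzip2 s ++ unzip2 t).
rewrite (@vsum_l _ _ s l) ?undup_uniq; last by move=> y ys; rewrite mem_undup mem_cat ys.
rewrite (@vsum_l _ _ t l) ?undup_uniq; last by move=> y ys; rewrite mem_undup mem_cat ys orbT.
- by apply: eq_bigr => u _; rewrite e.
- by [].
- by [].
Qed.

Lemma vsum_cat (M : lmodType F) (g : X -> M) s t : vsum g (s ++ t) = vsum g s + vsum g t.
Proof. by rewrite /vsum big_cat. Qed.
Lemma vsum_csc (M : lmodType F) (g : X -> M) c s : vsum g (csc c s) = c *: vsum g s.
Proof. by rewrite /vsum big_map scaler_sumr; apply: eq_bigr => p _; rewrite scalerA. Qed.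

Definition cmap (g : X -> X) (s : comb) : comb := [seq (p.1, g p.2) | p <- s].
Lemma cmap_cat g s t : cmap g (s ++ t) = cmap g s ++ cmap g t.
Proof. exact: map_cat. Qed.
Lemma cmap_csc g c s : cmap g (csc c s) = csc c (cmap g s).
Proof. by elim: s => //= p s ->. Qed.
Lemma fc_cmap g s u : fc (cmap g s) u = vsum (M := F^o) (fun x => (g x == u)%:R) s.
Proof.
rewrite /fc /vsum big_map big_mkcond; apply: eq_bigr => p _ /=.
by case: (g p.2 == u); rewrite /GRing.scale /= ?mulr1 ?mulr0.
Qed.

Ltac fcs := repeat progress rewrite ?fc_cat ?fc_csc ?fc_nil.
Record zpred := ZPred {
  zp :> comb -> Prop;
  zp0 : zp [::];
  zpD : forall s t, zp s -> zp t -> zp (s ++ t);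
  zpZ : forall c s, zp s -> zp (csc c s);
  zpE : forall s t, (forall u, fc s u = fc t u) -> zp s -> zp t }.
Variable Zr : zpred.
Local Notation Z := (zp Zr).
Let Z0 := zp0 Zr.
Let ZD := @zpD Zr.
Let ZZ := @zpZ Zr.
Let ZE := @zpE Zr.

Definition qrel s t := Z (s ++ csc (-1) t).

Lemma qrel_fc s t : (forall u, fc s u = fc t u) -> qrel s t.
Proof. move=> e; apply: ZE Z0 => u; rewrite fc_cat fc_csc fc_nil e; ring. Qed.
Lemma qrel_sym s t : qrel s t -> qrel t s.
Proof. move=> h; apply: ZE (ZZ (-1) h) => u; fcs;  ring. Qed.
Lemma qrel_trans s t r : qrel s t -> qrel t r -> qrel s r.
Proof. move=> h1 h2; apply: ZE (ZD h1 h2) => u; fcs;  ring. Qed.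

Definition rep (s : comb) : comb := epsilon (inhabits [::]) (qrel s).
Lemma rep_rel s : qrel s (rep s).
Proof. apply: (epsilon_spec (inhabits [::]) (qrel s)); exists s; exact: qrel_fc. Qed.
Lemma rep_eq s t : qrel s t -> rep s = rep t.
Proof.
move=> h; rewrite /rep; congr epsilon; apply: functional_extensionality => r.
apply: propositional_extensionality; split => h'.
  exact: qrel_trans (qrel_sym h) h'.
exact: qrel_trans h h'.
Qed.
Lemma rep_idem s : rep (rep s) == rep s.
Proof. by apply/eqP/rep_eq/qrel_sym/rep_rel. Qed.

Definition qT := {s : comb | rep s == s}.
HB.instance Definition _ := Choice.on qT.
Definition mk (s : comb) : qT := exist _ (rep s) (rep_idem s).

Lemma mk_eq s t : qrel s t -> mk s = mk t.
Proof. by move=> h; apply: val_inj => /=; apply: rep_eq. Qed.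
Lemma mk_rel s t : mk s = mk t -> qrel s t.
Proof.
move=> /(congr1 val) /= e; apply: qrel_trans (rep_rel s) _; rewrite e; exact: qrel_sym (rep_rel t).
Qed.
Lemma mkK (a : qT) : mk (val a) = a.
Proof. by apply: val_inj => /=; apply/eqP; case: a. Qed.
Lemma qT_ind (P : qT -> Prop) : (forall s, P (mk s)) -> forall a, P a.
Proof. by move=> h a; rewrite -(mkK a). Qed.
Lemma mk_fc s t : (forall u, fc s u = fc t u) -> mk s = mk t.
Proof. by move=> e; apply/mk_eq/qrel_fc. Qed.

Definition qzero := mk [::].
Definition qadd (a b : qT) := mk (val a ++ val b).
Definition qopp (a : qT) := mk (csc (-1) (val a)).
Definition qscale (c : F) (a : qT) := mk (csc c (val a)).

Lemma rep_relr s : qrel (rep s) s.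
Proof. exact/qrel_sym/rep_rel. Qed.

Lemma qaddE s t : qadd (mk s) (mk t) = mk (s ++ t).
Proof.
apply: mk_eq; apply: ZE (ZD (rep_relr s) (rep_relr t)) => u.
fcs;  ring.
Qed.
Lemma qscaleE c s : qscale c (mk s) = mk (csc c s).
Proof.
apply: mk_eq; apply: ZE (ZZ c (rep_relr s)) => u.
fcs;  ring.
Qed.
Lemma qoppE s : qopp (mk s) = mk (csc (-1) s).
Proof. exact: qscaleE. Qed.

Lemma qaddA : associative qadd.
Proof. by move=> a b c; rewrite -(mkK a) -(mkK b) -(mkK c) !qaddE catA. Qed.
Lemma qaddC : commutative qadd.
Proof. by move=> a b; rewrite -(mkK a) -(mkK b) !qaddE; apply: mk_fc => u; rewrite !fc_cat addrC. Qed.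
Lemma qadd0 : left_id qzero qadd.
Proof. by move=> a; rewrite -(mkK a) /qzero qaddE. Qed.
Lemma qaddN : left_inverse qzero qopp qadd.
Proof.
move=> a; rewrite -(mkK a) qoppE qaddE; apply: mk_fc => u.
rewrite fc_cat fc_csc fc_nil; ring.
Qed.
HB.instance Definition _ := GRing.isZmodule.Build qT qaddA qaddC qadd0 qaddN.
Lemma mk_add s t : mk s + mk t = mk (s ++ t). Proof. exact: qaddE. Qed.

Lemma qscaleA a b v : qscale a (qscale b v) = qscale (a * b) v.
Proof. by rewrite -(mkK v) !qscaleE; apply: mk_fc => u; rewrite !fc_csc mulrA. Qed.
Lemma qscale1 : left_id 1 qscale.
Proof. by move=> v; rewrite -(mkK v) !qscaleE; apply: mk_fc => u; rewrite !fc_csc mul1r. Qed.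
Lemma qscaleDr0 a v w : qscale a (qadd v w) = qadd (qscale a v) (qscale a w).
Proof.
elim/qT_ind: v => v; elim/qT_ind: w => w; rewrite /qadd /qscale /=.
apply: mk_eq.
apply: ZE (ZD (ZZ a (rep_relr (rep v ++ rep w)))
   (ZD (ZZ (-1) (rep_relr (csc a (rep v))))
        (ZZ (-1) (rep_relr (csc a (rep w)))))) => u.
fcs; ring.
Qed.
Lemma qscaleDr : right_distributive qscale +%R.
Proof. move=> a v w; exact: qscaleDr0. Qed.
Lemma qscaleDl0 v a b : qscale (a + b) v = qadd (qscale a v) (qscale b v).
Proof.
elim/qT_ind: v => v; rewrite /qadd /qscale /=.
apply: mk_eq; apply: ZE (ZD (ZZ (-1) (rep_relr (csc a (rep v)))) (ZZ (-1) (rep_relr (csc b (rep v))))) => u.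
fcs; ring.
Qed.
Lemma qscaleDl v : {morph qscale^~ v: a b / a + b}.
Proof. move=> a b; exact: qscaleDl0. Qed.
HB.instance Definition _ := GRing.Zmodule_isLmodule.Build F qT qscaleA qscale1 qscaleDr qscaleDl.

Lemma mk_scale c s : c *: mk s = mk (csc c s). Proof. exact: qscaleE. Qed.
Lemma mk_nil : mk [::] = 0. Proof. by []. Qed.
Lemma mk0 s : mk s = 0 -> Z (s).
Proof. move=> /mk_rel h; apply: ZE h => u; rewrite fc_cat fc_csc fc_nil; ring. Qed.
Lemma mkZ s : Z s -> mk s = 0.
Proof. move=> h; apply: mk_eq; apply: ZE h => u; rewrite fc_cat fc_csc fc_nil; ring. Qed.
Lemma qrel_cat s1 t1 s2 t2 : qrel s1 t1 -> qrel s2 t2 -> qrel (s1 ++ s2) (t1 ++ t2).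
Proof. move=> h1 h2; apply: ZE (ZD h1 h2) => u; fcs; ring. Qed.
Lemma qrel_csc c s t : qrel s t -> qrel (csc c s) (csc c t).
Proof. move=> h; apply: ZE (ZZ c h) => u; fcs; ring. Qed.

Lemma mk_sum (I : Type) (r : seq I) (f : I -> comb) :
  \sum_(i <- r) mk (f i) = mk (flatten (map f r)).
Proof. elim: r => [|i r IH]; rewrite ?big_nil // big_cons IH mk_add //. Qed.

Section QMap.
Variable g : X -> X.
Hypothesis Zg : forall s, Z s -> Z (cmap g s).
Definition qmap (a : qT) : qT := mk (cmap g (val a)).
Lemma qmapE s : qmap (mk s) = mk (cmap g s).
Proof.
apply: mk_eq; rewrite /qrel -cmap_csc -cmap_cat; apply: Zg; exact: rep_relr.
Qed.
Lemma qmap_lin : is_linear qmap.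
Proof.
move=> a x y; elim/qT_ind: x => x; elim/qT_ind: y => y.
by rewrite mk_scale mk_add !qmapE mk_scale mk_add cmap_cat cmap_csc.
Qed.
End QMap.
End Comb.

Inductive Spc (F : fieldType) (X : choiceType) (P : seq (F * X) -> Prop) : seq (F * X) -> Prop :=
| SpcP s : P s -> Spc P s
| Spc0 : Spc P [::]
| SpcD s t : Spc P s -> Spc P t -> Spc P (s ++ t)
| SpcZ c s : Spc P s -> Spc P (csc c s)
| SpcE s t : Spc P s -> (forall u, fc s u = fc t u) -> Spc P t.



Section Tup.
Variables (n : nat).
Lemma fmap_upd (V W : Type) (f : V -> W) (u : {ffun 'I_n -> V}) i x :
  fmap f (upd u i x) = upd (fmap f u) i (f x).
Proof. by apply/ffunP => j; rewrite !ffunE; case: (j == i). Qed.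
Lemma fmap_comp (U V W : Type) (f : V -> W) (g : U -> V) (u : {ffun 'I_n -> U}) :
  fmap f (fmap g u) = fmap (f \o g) u.
Proof. by apply/ffunP => j; rewrite !ffunE. Qed.
Lemma fmap'_comp (U V W : Type) (f : V -> W) (g : U -> V) (u : {ffun 'I_n.-1 -> U}) :
  fmap' f (fmap' g u) = fmap' (f \o g) u.
Proof. by apply/ffunP => j; rewrite !ffunE. Qed.
Lemma fmap_hd (V W : Type) (f : V -> W) z (y : {ffun 'I_n.-1 -> V}) :
  fmap f (hd_tup z y) = hd_tup (f z) (fmap' f y).
Proof.
apply/ffunP => j; rewrite !ffunE; case: (nat_of_ord j) => [|k] //.
by case: insubP => [k' _ _|_] //; rewrite ffunE.
Qed.
Lemma fmap_ext (V W : Type) (f g : V -> W) (u : {ffun 'I_n -> V}) : (forall x, f x = g x) -> fmap f u = fmap g u.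
Proof. by move=> e; apply/ffunP => j; rewrite !ffunE e. Qed.
Lemma fmap'_ext (V W : Type) (f g : V -> W) (u : {ffun 'I_n.-1 -> V}) : (forall x, f x = g x) -> fmap' f u = fmap' g u.
Proof. by move=> e; apply/ffunP => j; rewrite !ffunE e. Qed.
Lemma fmap_id (V : Type) (u : {ffun 'I_n -> V}) : fmap id u = u.
Proof. by apply/ffunP => j; rewrite !ffunE. Qed.
Lemma upd_id (V : Type) (u : {ffun 'I_n -> V}) i : upd u i (u i) = u.
Proof. by apply/ffunP => j; rewrite !ffunE; case: eqP => // ->. Qed.
Lemma upd_eq (V : Type) (u : {ffun 'I_n -> V}) i x : upd u i x i = x.
Proof. by rewrite ffunE eqxx. Qed.
Lemma upd_neq (V : Type) (u : {ffun 'I_n -> V}) i j x : j != i -> upd u i x j = u j.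
Proof. by rewrite ffunE => /negbTE ->. Qed.
End Tup.

Section Lin.
Variables (F : fieldType).
Variables (V W : lmodType F) (f : V -> W) (hf : is_linear f).
Lemma lin0 : f 0 = 0.
Proof. have := hf 1 0 0; rewrite scale1r addr0 scale1r => e; apply: (addrI (f 0)); by rewrite addr0 -e. Qed.
Lemma linD x y : f (x + y) = f x + f y.
Proof. by have := hf 1 x y; rewrite !scale1r. Qed.
Lemma linZ a x : f (a *: x) = a *: f x.
Proof. by have := hf a x 0; rewrite !addr0 lin0 addr0. Qed.
Lemma linN x : f (- x) = - f x.
Proof. by rewrite -scaleN1r linZ scaleN1r. Qed.
Lemma lin_sum (I : Type) (r : seq I) (G : I -> V) : f (\sum_(i <- r) G i) = \sum_(i <- r) f (G i).
Proof. elim: r => [|i r IH]; rewrite ?big_nil ?lin0 // !big_cons linD IH //. Qed.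
End Lin.

Section Prod.
Variables (F : fieldType) (n : nat) (K : hleib F n) (V : lmodType F).
Variables (aV : V -> V) (haV : is_linear aV) (beta : {ffun 'I_n -> K} -> V).
Hypotheses (hb_ml : multilinear beta)
  (hb_a : forall x, aV (beta x) = beta (fmap (@hl_alpha _ _ K) x))
  (hb_l : forall (x : {ffun 'I_n -> K}) (y : {ffun 'I_n.-1 -> K}),
     beta (hd_tup (hl_br x) (fmap' (@hl_alpha _ _ K) y))
     = \sum_(i < n) beta (upd (fmap (@hl_alpha _ _ K) x) i (hl_br (hd_tup (x i) y)))).

Local Notation KV := (K * V)%type.
Definition pbr (u : {ffun 'I_n -> KV}) : KV :=
  (hl_br (fmap fst u), beta (fmap fst u)).
Definition palpha (p : KV) : KV := (hl_alpha p.1, aV p.2).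

Lemma fst_sum (I : Type) (r : seq I) (G : I -> KV) : (\sum_(i <- r) G i).1 = \sum_(i <- r) (G i).1.
Proof. elim: r => [|i r IH]; rewrite ?big_nil // !big_cons /= IH //. Qed.
Lemma snd_sum (I : Type) (r : seq I) (G : I -> KV) : (\sum_(i <- r) G i).2 = \sum_(i <- r) (G i).2.
Proof. elim: r => [|i r IH]; rewrite ?big_nil // !big_cons /= IH //. Qed.

Lemma pbr_ml : multilinear pbr.
Proof.
move=> i u a x y; rewrite /pbr !fmap_upd /=.
by rewrite (hl_br_ml (h:=K)) hb_ml.
Qed.
Lemma palpha_lin : is_linear palpha.
Proof.
move=> a x y; rewrite /palpha /=.
by rewrite (hl_alpha_lin (h:=K)) haV.
Qed.
Lemma palpha_br u : palpha (pbr u) = pbr (fmap palpha u).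
Proof.
rewrite /palpha /pbr /= fmap_comp hl_alpha_br hb_a.
by rewrite fmap_comp.
Qed.
Lemma pleib (x : {ffun 'I_n -> KV}) (y : {ffun 'I_n.-1 -> KV}) :
    pbr (hd_tup (pbr x) (fmap' palpha y))
    = \sum_(i < n) pbr (upd (fmap palpha x) i (pbr (hd_tup (x i) y))).
Proof.
have pe : forall p q : KV, p.1 = q.1 -> p.2 = q.2 -> p = q by move=> [? ?] [? ?] /= -> ->.
apply: pe.
  rewrite fst_sum /pbr /= fmap_hd /= fmap'_comp.
  rewrite (fmap'_ext (g := @hl_alpha _ _ K \o fst)) // -fmap'_comp hl_leibniz.
  apply: eq_bigr => i _; rewrite fmap_upd fmap_hd ffunE /=.
  by congr (hl_br (upd _ i _)); apply/ffunP => j; rewrite !ffunE.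
rewrite snd_sum /pbr /= fmap_hd /= fmap'_comp.
rewrite (fmap'_ext (g := @hl_alpha _ _ K \o fst)) // -fmap'_comp hb_l.
apply: eq_bigr => i _; rewrite fmap_upd fmap_hd ffunE /=.
by congr (beta (upd _ i _)); apply/ffunP => j; rewrite !ffunE.
Qed.

Definition prodHL : hleib F n := HLeib pbr_ml palpha_lin palpha_br pleib.
End Prod.


Section Main.
Variables (F : fieldType) (m : nat).
Local Notation n := m.+2.
Variables (K L : hleib F n) (pi : K -> L).
Hypothesis hU : universal_alpha_central_ext pi.
Local Notation al := (@hl_alpha F n K).
Local Notation tup := {ffun 'I_n -> K}.

Lemma pi_hom : is_hom pi. Proof. by case: hU => [[[]]]. Qed.
Lemma pi_lin : is_linear pi. Proof. by case: pi_hom. Qed.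
Lemma pi_br u : pi (hl_br u) = hl_br (fmap pi u). Proof. by case: pi_hom. Qed.
Lemma pi_al x : pi (al x) = hl_alpha (pi x). Proof. by case: pi_hom. Qed.
Lemma pi_surj l : exists k, pi k = l. Proof. by case: hU => [[[_ ]]]. Qed.
Lemma al_lin : is_linear al. Proof. exact: hl_alpha_lin. Qed.
Lemma ker_alpha c : pi c = 0 -> pi (al c) = 0.
Proof. by move=> h; rewrite pi_al h (lin0 (@hl_alpha_lin _ _ L)). Qed.
Lemma ker_center c : pi c = 0 -> forall (v : tup) j, v j = c -> hl_br v = 0.
Proof.
move=> h v j e; case: hU => [[_ hc] _]; have := hc c h j v.
by rewrite -e upd_id.
Qed.
Lemma other (i : 'I_n) : exists j, j != i.
Proof.
case: (eqVneq i ord0) => [->|ne]; last by exists ord0; rewrite eq_sym.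
by exists ord_max.
Qed.
Lemma pi_ac : alpha_central_ext pi.
Proof.
split; first by case: hU => [[]].
move=> i u H; have [j ji] := other i; have [c [kc e]] := H j ji.
exact: (ker_center (ker_alpha kc) e).
Qed.
Lemma id_hom : is_hom (id : K -> K).
Proof. by split => // u; rewrite fmap_id. Qed.
Lemma uniq_id (g : K -> K) : is_hom g -> (forall x, pi (g x) = pi x) -> forall x, g x = x.
Proof.
move=> hg hp x; case: hU => _ /(_ K pi pi_ac) [h0 [_ _ hu]].
by rewrite (hu g hg hp) -(hu id id_hom (fun _ => erefl)).
Qed.

Section Ext.
Variables (V : lmodType F) (aV : V -> V) (haV : is_linear aV) (beta : tup -> V).
Hypotheses (hb_ml : multilinear beta)
  (hb_a : forall x, aV (beta x) = beta (fmap al x))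
  (hb_l : forall (x : tup) (y : {ffun 'I_n.-1 -> K}),
     beta (hd_tup (hl_br x) (fmap' al y))
     = \sum_(i < n) beta (upd (fmap al x) i (hl_br (hd_tup (x i) y))))
  (hb_ac : forall (i : 'I_n) (u : tup), (forall j, j != i -> exists c, pi c = 0 /\ u j = al c) -> beta u = 0).

Definition KV := prodHL haV hb_ml hb_a hb_l.
Definition pp (x : KV) : L := pi x.1.

Lemma pair_ext (p q : KV) : p.1 = q.1 -> p.2 = q.2 -> p = q.
Proof. by case: p q => [? ?] [? ?] /= -> ->. Qed.

Lemma pp_ac : alpha_central_ext pp.
Proof.
split; first split.
- split.
  + by move=> a x y; rewrite /pp /= pi_lin.
  + by move=> u; rewrite /pp /= pi_br fmap_comp.
  + by move=> x; rewrite /pp /= pi_al.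
- by move=> l; have [k <-] := pi_surj l; exists (k, 0).
move=> i u H; apply: pair_ext => /=.
  have [j ji] := other i; have [c [kc e]] := H j ji.
  apply: (ker_center (c := al c.1) _ (j := j)); first exact: ker_alpha.
  by rewrite ffunE e.
apply: (hb_ac (i := i)) => j ji; have [c [kc e]] := H j ji.
by exists c.1; split => //; rewrite ffunE e.
Qed.

Lemma ext_univ : exists h : K -> KV, [/\ is_hom h, forall x, (h x).1 = x &
   forall h' : K -> KV, is_hom h' -> (forall x, pi (h' x).1 = pi x) -> forall x, h' x = h x].
Proof.
case: hU => _ /(_ KV pp pp_ac) [h [hh hp hu]]; exists h; split => //.
apply: uniq_id => //; case: hh => hl hb ha; split.
- by move=> a x y; rewrite hl.
- by move=> u; rewrite hb /= fmap_comp.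
- by move=> x; rewrite ha.
Qed.
End Ext.

Definition Bsp (x : K) := exists s : seq (F * tup), x = \sum_(p <- s) p.1 *: hl_br p.2.
Lemma Bsp0 : Bsp 0. Proof. by exists [::]; rewrite big_nil. Qed.
Lemma BspD x y : Bsp x -> Bsp y -> Bsp (x + y).
Proof. by move=> [s ->] [t ->]; exists (s ++ t); rewrite big_cat. Qed.
Lemma BspZ c x : Bsp x -> Bsp (c *: x).
Proof.
move=> [s ->]; exists [seq (c * p.1, p.2) | p <- s]; rewrite big_map scaler_sumr.
by apply: eq_bigr => p _; rewrite scalerA.
Qed.
Lemma Bsp_al x : Bsp x -> Bsp (al x).
Proof.
move=> [s ->]; exists [seq (p.1, fmap al p.2) | p <- s]; rewrite big_map (lin_sum al_lin).
by apply: eq_bigr => p _; rewrite (linZ al_lin) hl_alpha_br.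
Qed.
Lemma Bsp_br u : Bsp (hl_br u).
Proof. by exists [:: (1, u)]; rewrite big_cons big_nil scale1r addr0. Qed.

Definition ZQ : zpred F K.
Proof.
refine (@ZPred F K (fun s => Bsp (vsum id s)) _ _ _ _).
- by rewrite /vsum big_nil; exact: Bsp0.
- by move=> s t hs ht; rewrite vsum_cat; apply: BspD.
- by move=> c s hs; rewrite vsum_csc; apply: BspZ.
- by move=> s t e; rewrite (vsum_fc id e).
Defined.
Local Notation Q := (qT ZQ).
Lemma ZQ_al s : ZQ s -> ZQ (cmap al s).
Proof.
rewrite /= => h; suff -> : vsum id (cmap al s) = al (vsum id s) by apply: Bsp_al.
rewrite /vsum big_map (lin_sum al_lin); apply: eq_bigr => p _ /=.
by rewrite (linZ al_lin).
Qed.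
Definition aQ : Q -> Q := qmap al.
Lemma aQ_lin : is_linear aQ. Proof. exact: (qmap_lin ZQ_al). Qed.
Definition betaQ (x : tup) : Q := 0.
Lemma bQ_ml : multilinear betaQ. Proof. by move=> *; rewrite /betaQ scaler0 addr0. Qed.
Lemma bQ_a x : aQ (betaQ x) = betaQ (fmap al x). Proof. exact: (lin0 aQ_lin). Qed.
Lemma bQ_l (x : tup) (y : {ffun 'I_n.-1 -> K}) :
     betaQ (hd_tup (hl_br x) (fmap' al y))
     = \sum_(i < n) betaQ (upd (fmap al x) i (hl_br (hd_tup (x i) y))).
Proof. by rewrite big1. Qed.
Lemma bQ_ac (i : 'I_n) (u : tup) :
  (forall j, j != i -> exists c, pi c = 0 /\ u j = al c) -> betaQ u = 0.
Proof. by []. Qed.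

Definition iota (k : K) : Q := mk ZQ [:: (1, k)].
Lemma iota_lin : is_linear iota.
Proof.
move=> a x y; rewrite /iota mk_scale mk_add; apply: mk_eq.
rewrite /qrel /= /vsum !big_cons !big_nil /=.
suff -> : 1 *: (a *: x + y) + ((-1 * (a * 1)) *: x + ((-1 * 1) *: y + 0)) = 0 :> K by exact: Bsp0.
by rewrite !mulr1 !mulN1r scale1r addr0 !scaleNr scale1r -opprD subrr.
Qed.

Lemma HL0 : HL0_trivial K.
Proof.
have [h [hh h1 hu]] := ext_univ aQ_lin bQ_ml bQ_a bQ_l bQ_ac.
pose hA := fun k : K => ((k, 0) : KV aQ_lin bQ_ml bQ_a bQ_l).
pose hB := fun k : K => ((k, iota k) : KV aQ_lin bQ_ml bQ_a bQ_l).
have hAh : is_hom hA.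
  split.
  - by move=> a x y; apply: pair_ext => //=; rewrite scaler0 addr0.
  - by move=> u; apply: pair_ext => //=; rewrite fmap_comp fmap_id.
  - by move=> x; apply: pair_ext => //=; rewrite (lin0 aQ_lin).
have hBh : is_hom hB.
  split.
  - by move=> a x y; apply: pair_ext => //=; rewrite iota_lin.
  - move=> u; apply: pair_ext => /=; first by rewrite fmap_comp fmap_id.
    rewrite /betaQ /iota; apply: mkZ => /=; rewrite /vsum big_cons big_nil /= scale1r addr0.
    exact: Bsp_br.
  - by move=> x; apply: pair_ext => //=; rewrite /aQ /iota qmapE //; exact: ZQ_al.
move=> x; have eA := hu hA hAh (fun _ => erefl) x.
have eB := hu hB hBh (fun _ => erefl) x.
have := congr1 snd (etrans eB (esym eA)); rewrite /= /iota => /mk0 /=.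
by rewrite /vsum big_cons big_nil /= scale1r addr0.
Qed.


Lemma fc_cons' (c : F) (x : tup) s u : fc ((c, x) :: s) u = c * (x == u)%:R + fc s u.
Proof. by rewrite /fc big_cons /=; case: (x == u); rewrite ?mulr1 ?mulr0 ?add0r. Qed.
Lemma fc_single (c : F) (x : tup) u : fc [:: (c, x)] u = c * (x == u)%:R.
Proof. by rewrite fc_cons' fc_nil addr0. Qed.

Lemma SpcE' (P : seq (F * tup) -> Prop) s t : (forall u, fc s u = fc t u) -> Spc P s -> Spc P t.
Proof. by move=> e h; apply: SpcE h e. Qed.

Definition PW (s : seq (F * tup)) : Prop :=
  (exists i u a x y, s = ml_gen i u a x y) \/ (exists x y, s = delta2 x y) \/
  (exists (x : tup) (i : 'I_n), s = [:: (1, x)] /\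
       forall j, j != i -> exists c, pi c = 0 /\ x j = al c).
Definition PML (s : seq (F * tup)) : Prop := exists i u a x y, s = ml_gen i u a x y.

Definition mkZP (P : seq (F * tup) -> Prop) : zpred F tup :=
  @ZPred F tup (Spc P) (@Spc0 _ _ P) (@SpcD _ _ P) (@SpcZ _ _ P) (@SpcE' P).
Definition ZW := mkZP PW.
Definition ZML := mkZP PML.

Lemma cmap_delta2 (x : tup) (y : {ffun 'I_n.-1 -> K}) :
  cmap (fmap al) (delta2 x y) = delta2 (fmap al x) (fmap' al y).
Proof.
rewrite /cmap /delta2 /=; congr (_ :: _).
  by rewrite fmap_hd hl_alpha_br.
rewrite -map_comp; apply: eq_map => i /=.
by rewrite fmap_upd hl_alpha_br fmap_hd ffunE.
Qed.

Lemma ZW_al s : ZW s -> ZW (cmap (fmap al) s).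
Proof.
rewrite /=; elim.
- move=> {}s [[i [u [a [x [y ->]]]]] | [[x [y ->]] | [x [i [-> hx]]]]].
  + apply: SpcP; left; exists i, (fmap al u), a, (al x), (al y).
    by rewrite /cmap /ml_gen /= !fmap_upd al_lin.
  + by apply: SpcP; right; left; exists (fmap al x), (fmap' al y); rewrite cmap_delta2.
  + apply: SpcP; right; right; exists (fmap al x), i; split => // j ji.
    have [c [kc e]] := hx j ji; exists (al c); split; first exact: ker_alpha.
    by rewrite ffunE e.
- exact: Spc0.
- by move=> s1 s2 _ h1 _ h2; rewrite cmap_cat; apply: SpcD.
- by move=> c s1 _ h1; rewrite cmap_csc; apply: SpcZ.
- move=> s1 s2 _ h1 e; apply: SpcE h1 _ => u; rewrite !fc_cmap.
  exact: (@vsum_fc _ _ F^o _ _ _ e).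
Qed.

Local Notation W := (qT ZW).
Definition aW : W -> W := qmap (fmap al).
Lemma aW_lin : is_linear aW. Proof. exact: (qmap_lin ZW_al). Qed.
Definition betaW (x : tup) : W := mk ZW [:: (1, x)].

Lemma bW_ml : multilinear betaW.
Proof.
move=> i u a x y; rewrite /betaW mk_scale mk_add; apply: mk_eq; rewrite /qrel /=.
apply: (SpcE' (s := ml_gen i u a x y)); last by apply: SpcP; left; exists i, u, a, x, y.
by move=> v; rewrite /ml_gen !fc_cons' fc_nil; ring.
Qed.
Lemma bW_a x : aW (betaW x) = betaW (fmap al x).
Proof. by rewrite /aW /betaW qmapE //; exact: ZW_al. Qed.

Lemma csc_flat1 (c : F) (T : 'I_n -> tup) (r : seq 'I_n) :
  csc c (flatten [seq [:: (1, T i)] | i <- r]) = [seq (c, T i) | i <- r].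
Proof. by elim: r => //= i r ->; rewrite mulr1. Qed.

Lemma bW_l (x : tup) (y : {ffun 'I_n.-1 -> K}) :
     betaW (hd_tup (hl_br x) (fmap' al y))
     = \sum_(i < n) betaW (upd (fmap al x) i (hl_br (hd_tup (x i) y))).
Proof.
rewrite -big_enum /betaW mk_sum; apply: mk_eq; rewrite /qrel /= csc_flat1.
by apply: SpcP; right; left; exists x, y.
Qed.
Lemma bW_ac (i : 'I_n) (u : tup) :
  (forall j, j != i -> exists c, pi c = 0 /\ u j = al c) -> betaW u = 0.
Proof. by move=> h; apply: mkZ; apply: SpcP; right; right; exists u, i. Qed.

Lemma HL1_step t : delta1 t = 0 -> Spc PW t.
Proof.
move=> ht; have [h [hh h1 hu]] := ext_univ aW_lin bW_ml bW_a bW_l bW_ac.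
case: hh => hl hb ha.
have fbr : forall u, (h (hl_br u)).2 = betaW u.
  move=> u; rewrite hb /= fmap_comp (fmap_ext (g := id)) ?fmap_id //.
have flin : is_linear (fun k => (h k).2) by move=> a x y; rewrite hl.
have : (h (delta1 t)).2 = 0 by rewrite ht (lin0 flin).
rewrite /delta1 (lin_sum flin).
under eq_bigr => p _ do rewrite (linZ flin) fbr /betaW mk_scale.
rewrite mk_sum => /mk0 /=; apply: SpcE' => u.
elim: t {ht} => [|[c x] t IH] //=.
by rewrite !fc_cons' IH mulr1.
Qed.


Local Notation eqv := (qrel ZML).
Arguments qrel : simpl never.
Lemma eqv_refl s : eqv s s. Proof. exact: qrel_fc. Qed.

Lemma zero_entry (c : F) (v : tup) k : eqv [:: (c, upd v k 0)] [::].
Proof.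
rewrite /qrel /=; apply: (SpcE' (s := csc (-c) (ml_gen k v 1 0 0))).
  by move=> u; rewrite /ml_gen /= scale1r addr0 !fc_cons' fc_nil; ring.
by apply: SpcZ; apply: SpcP; exists k, v, 1, 0, 0.
Qed.

Lemma filt (a : F) (T : 'I_n -> tup) (P : pred 'I_n) (r : seq 'I_n) :
  (forall j, ~~ P j -> exists v k, T j = upd v k 0) ->
  eqv [seq (a, T j) | j <- r] [seq (a, T j) | j <- r & P j].
Proof.
move=> hz; elim: r => [|j r IH] /=; first exact: eqv_refl.
case: (boolP (P j)) => Pj.
  exact: (qrel_cat (s1 := [:: _]) (eqv_refl _) IH).
have [v [k ->]] := hz j Pj.
exact: (qrel_cat (s1 := [:: _]) (t1 := [::]) (zero_entry _ _ _) IH).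
Qed.

Lemma hd0 (z : K) (y : {ffun 'I_n.-1 -> K}) : hd_tup z y ord0 = z.
Proof. by rewrite ffunE. Qed.
Lemma hdS (z : K) (y : {ffun 'I_n.-1 -> K}) (k : 'I_m.+1) : hd_tup z y (lift ord0 k) = y k.
Proof.
rewrite ffunE lift0; case: insubP => [k' _ e|]; last by rewrite ltn_ord.
by congr (y _); apply: val_inj.
Qed.
Lemma hd_eta (v : tup) : hd_tup (v ord0) [ffun k => v (lift ord0 k)] = v.
Proof.
apply/ffunP => j; case: (unliftP ord0 j) => [k ->|->]; first by rewrite hdS ffunE.
by rewrite hd0.
Qed.

Lemma gen_scale (I : Type) (D : I -> seq (F * tup)) (c : F) (r : seq (F * I)) :
  flatten [seq csc q.1 (D q.2) | q <- [seq (c * q.1, q.2) | q <- r]]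
  = csc c (flatten [seq csc q.1 (D q.2) | q <- r]).
Proof.
elim: r => //= q r ->; rewrite /csc map_cat; congr (_ ++ _).
by rewrite -map_comp; apply: eq_map => p /=; rewrite mulrA.
Qed.
Lemma dc_scale (c : F) (d : seq (F * (tup * {ffun 'I_n.-1 -> K}))) :
  delta2_comb [seq (c * q.1, q.2) | q <- d] = csc c (delta2_comb d).
Proof. exact: (gen_scale (fun q => delta2 q.1 q.2)). Qed.
Lemma dc_cat (d1 d2 : seq (F * (tup * {ffun 'I_n.-1 -> K}))) : delta2_comb (d1 ++ d2) = delta2_comb d1 ++ delta2_comb d2.
Proof. by rewrite /delta2_comb map_cat flatten_cat. Qed.

Lemma dc1 (a : F) (x : tup) (y : {ffun 'I_n.-1 -> K}) :
  delta2_comb [:: (a, (x, y))] = csc a (delta2 x y).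
Proof. by rewrite /delta2_comb /= cats0. Qed.

Lemma single (x : tup) (i : 'I_n) (c : 'I_n -> K)
  (hc : forall j, j != i -> pi (c j) = 0 /\ x j = al (c j)) (w : tup) :
  exists d, eqv [:: (1, upd x i (hl_br w))] (delta2_comb d).
Proof.
case: (unliftP ord0 i) => [k0 ei|ei].
-
  have i0 : ord0 != i by rewrite ei neq_lift.
  pose u : tup := [ffun j => if j == i then w ord0 else c j].
  pose z : {ffun 'I_n.-1 -> K} := [ffun k => w (lift ord0 k)].
  exists [:: (-1, (u, z))].
  have bu : hl_br u = 0.
    apply: (ker_center (hc _ i0).1 (j := ord0)); by rewrite ffunE (negbTE i0).
  have Ti : upd (fmap al u) i (hl_br (hd_tup (u i) z)) = upd x i (hl_br w).
    have ui : u i = w ord0 by rewrite ffunE eqxx.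
    rewrite ui hd_eta; apply/ffunP => j; rewrite !ffunE.
    by case: eqP => // /eqP ji; rewrite (hc j ji).2.
  have hD : eqv (delta2 u z) [:: (-1, upd x i (hl_br w))].
    rewrite /delta2 bu -(upd_id (hd_tup 0 (fmap' al z)) ord0) hd0.
    apply: (qrel_cat (s1 := [:: _]) (t1 := [::]) (zero_entry _ _ _)).
    apply: qrel_trans (filt _ _ (P := pred1 i) _) _.
      move=> j ji0; have ji : j != i := ji0; exists (fmap al u), j; congr upd.
      apply: (ker_center (hc j ji).1 (j := ord0)).
      by rewrite hd0 ffunE (negbTE ji).
    by rewrite filter_pred1_uniq ?enum_uniq ?mem_enum //= Ti; exact: eqv_refl.
  apply: qrel_trans (_ : eqv _ (csc (-1) (delta2 u z))) _.
    apply: qrel_trans (qrel_sym (qrel_csc (-1) hD)); apply: qrel_fc => v.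
    by rewrite fc_csc !fc_single; ring.
  by apply: qrel_fc => v; rewrite /delta2_comb /= cats0.
-
  pose y : {ffun 'I_n.-1 -> K} := [ffun k => c (lift ord0 k)].
  exists [:: (1, (w, y))].
  have HX : hd_tup (hl_br w) (fmap' al y) = upd x i (hl_br w).
    apply/ffunP => j; case: (unliftP ord0 j) => [k ->|->].
      have lk : (lift ord0 k == ord0) = false by apply/negbTE; rewrite eq_sym neq_lift.
      rewrite hdS !ffunE ei lk.
      by rewrite (hc (lift ord0 k) _).2 // ei eq_sym neq_lift.
    by rewrite hd0 ffunE ei eqxx.
  apply: qrel_trans (_ : eqv _ (delta2 w y)) _; last first.
    by apply: qrel_fc => v; rewrite dc1 fc_csc; ring.
  rewrite /delta2 HX -[[:: (1, upd x i (hl_br w))]]cats0.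
  apply: qrel_sym; apply: (qrel_cat (s1 := [:: _]) (eqv_refl _)).
  apply: qrel_trans (filt _ _ (P := pred0) _) _; last first.
    by rewrite filter_pred0; exact: eqv_refl.
  move=> j _; exists (fmap al w), j; congr upd.
  apply: (ker_center (hc (lift ord0 ord0) _).1 (j := lift ord0 ord0)).
    by rewrite ei eq_sym neq_lift.
  by rewrite hdS ffunE.
Qed.

Lemma expand (u : tup) i (s0 : seq (F * tup)) :
  eqv [:: (1, upd u i (\sum_(p <- s0) p.1 *: hl_br p.2))]
      [seq (p.1, upd u i (hl_br p.2)) | p <- s0].
Proof.
elim: s0 => [|[a w] s0 IH] /=; first by rewrite big_nil; exact: zero_entry.
rewrite big_cons /=.
apply: qrel_trans (qrel_cat (s1 := [:: _]) (eqv_refl _) IH).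
rewrite /qrel /=; apply: (SpcE' (s := ml_gen i u a (hl_br w) (\sum_(p <- s0) p.1 *: hl_br p.2))).
  by move=> v; rewrite /ml_gen /= !fc_cons' fc_nil; ring.
by apply: SpcP; eexists _, _, _, _, _.
Qed.

Lemma single_all (x : tup) (i : 'I_n)
  (hx : forall j, j != i -> exists c, pi c = 0 /\ x j = al c) :
  exists d, eqv [:: (1, x)] (delta2_comb d).
Proof.
pose c j := epsilon (inhabits (0 : K)) (fun k0 => j != i -> pi k0 = 0 /\ x j = al k0).
have hc : forall j, j != i -> pi (c j) = 0 /\ x j = al (c j).
  move=> j ji; have [k0 hk0] := hx j ji.
  have := @epsilon_spec K (inhabits 0) (fun k0 => j != i -> pi k0 = 0 /\ x j = al k0)
    (ex_intro _ k0 (fun _ => hk0)).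
  by move=> /(_ ji).
have [s0 e] := HL0 (x i).
have H : exists d, eqv [seq (p.1, upd x i (hl_br p.2)) | p <- s0] (delta2_comb d).
  elim: s0 {e} => [|[a w] s0 [d IH]] /=; first by exists [::]; exact: eqv_refl.
  have [dw hw] := single hc w.
  exists ([seq (a * q.1, q.2) | q <- dw] ++ d); rewrite dc_cat dc_scale.
  apply: (qrel_cat (s1 := [:: _])) IH.
  apply: qrel_trans (qrel_csc a hw); apply: qrel_fc => v.
  by rewrite fc_csc !fc_single; ring.
have [d hd] := H; exists d; apply: qrel_trans hd.
by rewrite -{1}(upd_id x i) e; exact: expand.
Qed.

Lemma lemA s : Spc PW s -> exists d, eqv s (delta2_comb d).
Proof.
elim.
- move=> {}s [[i [u [a [x [y ->]]]]] | [[x [y ->]] | [x [i [-> hx]]]]].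
  + exists [::]; apply: (SpcE' (s := ml_gen i u a x y)); last first.
      by apply: SpcP; exists i, u, a, x, y.
    by move=> v; rewrite fc_cat fc_csc /= fc_nil; ring.
  + exists [:: (1, (x, y))]; apply: qrel_fc => v.
    by rewrite dc1 fc_csc; ring.
  + exact: (single_all hx).
- by exists [::]; exact: eqv_refl.
- move=> s1 s2 _ [d1 h1] _ [d2 h2]; exists (d1 ++ d2); rewrite dc_cat.
  exact: qrel_cat.
- move=> a s1 _ [d h]; exists [seq (a * q.1, q.2) | q <- d]; rewrite dc_scale.
  exact: qrel_csc.
- move=> s1 s2 _ [d h] e; exists d; apply: qrel_trans h.
  exact/qrel_sym/qrel_fc.
Qed.

Lemma lemB s : Spc PML s -> exists g : seq (F * ('I_n * tup * F * K * K)),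
  forall u, fc s u = fc (flatten [seq csc q.1
                        (ml_gen q.2.1.1.1.1 q.2.1.1.1.2 q.2.1.1.2 q.2.1.2 q.2.2)
                     | q <- g]) u.
Proof.
elim.
- move=> {}s [i [u [a [x [y ->]]]]]; exists [:: (1, (i, u, a, x, y))] => v /=.
  by rewrite /ml_gen !fc_cons' fc_nil; ring.
- by exists [::].
- move=> s1 s2 _ [g1 h1] _ [g2 h2]; exists (g1 ++ g2) => v.
  by rewrite map_cat flatten_cat !fc_cat h1 h2.
- move=> a s1 _ [g h]; exists [seq (a * q.1, q.2) | q <- g] => v.
  rewrite (gen_scale (fun q => ml_gen q.1.1.1.1 q.1.1.1.2 q.1.1.2 q.1.2 q.2)).
  by rewrite !fc_csc h.
- by move=> s1 s2 _ [g h] e; exists g => v; rewrite -e h.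
Qed.

Lemma HL1 : HL1_trivial K.
Proof.
move=> t /HL1_step /lemA [d hd]; exists d.
have [g hg] := lemB hd; exists g => u.
have := hg u; rewrite fc_cat fc_csc => e.
change (fc t u - fc (delta2_comb d) u = fc (flatten [seq csc q.1
   (ml_gen q.2.1.1.1.1 q.2.1.1.1.2 q.2.1.1.2 q.2.1.2 q.2.2) | q <- g]) u).
by rewrite -e; ring.
Qed.

End Main.


Theorem theorem3p11 (F : fieldType) (n : nat) (hn : (2 <= n)%N)
    (K L : hleib F n) (pi : K -> L) :
  universal_alpha_central_ext pi ->
  HL0_trivial K /\ HL1_trivial K.
Proof.
case: n hn K L pi => [|[|m]] // _ K L pi hU.
by split; [exact: (HL0 hU) | exact: (HL1 hU)].
Qed.
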